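(* Let $(B,\lfloor\cdot,\cdot\rfloor)$ be an SSD space with quadratic form $q$ and let $A\subset B$ be $q$-positive. Then: (1) $A\subset \mathcal{P}_q(\Phi_A^{@})\subset G_{\Phi_A}\subset A^{\pi}\cap \operatorname{conv}^w A$; (2) if $A$ is convex and $w(B,B)$-closed, then $A=G_{\Phi_A}$; (3) if $A$ is maximally $q$-positive, then $A=G_{\Phi_A}$.
   Context: An SSD space is a pair $(B,\lfloor\cdot,\cdot\rfloor)$ with $B$ a nonzero real vector space and $\lfloor\cdot,\cdot\rfloor$ a symmetric bilinear form; $q(b)=\frac12\lfloor b,b\rfloor$. $w(B,B)$ is the (possibly non-Hausdorff) weak topology on $B$, the coarsest topology making all maps $b\mapsto\lfloor b,c\rfloor$ ($c\in B$) continuous; $\operatorname{conv}^w A$ denotes the $w(B,B)$-closure of the convex hull of $A$. A nonempty $A\subset B$ is $q$-positive if $q(b-c)\ge0$ for all $b,c\in A$; maximally $q$-positive if $q$-positive and not properly contained in another $q$-positive set. $A^{\pi}:=\{b\in B: q(b-a)\ge0\ \forall a\in A\}$. $\Phi_A(x)=\sup_{a\in A}\{\lfloor x,a\rfloor-q(a)\}$. For proper convex $f:B\to\mathbb{R}\cup\{+\infty\}$, $f^{@}(b)=\sup_{c\in B}\{\lfloor c,b\rfloor-f(c)\}$, $\mathcal{P}_q(f)=\{b\in B: f(b)=q(b)\}$, and $G_f=\{b\in B: f(b)+f^{@}(b)=\lfloor b,b\rfloor\}$. *)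

(* Defs.v *)
From HB Require Import structures.
From mathcomp Require Import all_boot all_order all_algebra.
From mathcomp Require Import boolp classical_sets reals constructive_ereal ereal.
Set Implicit Arguments. Unset Strict Implicit. Unset Printing Implicit Defensive.
Import Order.TTheory GRing.Theory Num.Theory.
Local Open Scope classical_set_scope.
Local Open Scope ring_scope.

Section SSD.
Variables (R : realType) (B : lmodType R) (bf : B -> B -> R).

(* (B, bf) is an SSD space: B nonzero, bf symmetric bilinear
   (linearity in the second argument follows from symmetry). *)
Definition SSD_space : Prop :=
  (exists b : B, b != 0) /\
  (forall x y, bf x y = bf y x) /\
  (forall (a : R) x y z, bf (a *: x + y) z = a * bf x z + bf y z).

Definition q (b : B) : R := bf b b / 2.

Definition q_positive (A : set B) : Prop :=
  A !=set0 /\ forall b c, A b -> A c -> 0 <= q (b - c).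

Definition max_q_positive (A : set B) : Prop :=
  q_positive A /\ forall A', q_positive A' -> A `<=` A' -> A' = A.

Definition pi_set (A : set B) : set B :=
  [set b | forall a, A a -> 0 <= q (b - a)].

Definition Phi (A : set B) (x : B) : \bar R :=
  ereal_sup [set ((bf x a - q a)%:E) | a in A].

Definition conj_at (f : B -> \bar R) (b : B) : \bar R :=
  ereal_sup [set ((bf c b)%:E - f c)%E | c in [set: B]].

Definition Pq (f : B -> \bar R) : set B := [set b | f b = (q b)%:E].

Definition Gset (f : B -> \bar R) : set B :=
  [set b | (f b + conj_at f b)%E = (bf b b)%:E].

Definition conv_hull (A : set B) : set B :=
  [set x | exists (n : nat) (l : 'I_n -> R) (a : 'I_n -> B),
     (forall i, 0 <= l i) /\ \sum_(i < n) l i = 1 /\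
     (forall i, A (a i)) /\ x = \sum_(i < n) l i *: a i].

(* closure in w(B,B): the initial topology of the maps y |-> bf y c;
   basic neighbourhoods of x are finite intersections
   { y | |bf y c_i - bf x c_i| < e }. *)
Definition w_closure (S : set B) : set B :=
  [set x | forall (cs : seq B) (e : R), 0 < e ->
     exists s, S s /\ all (fun c => `|bf s c - bf x c| < e) cs].

Definition convw (A : set B) : set B := w_closure (conv_hull A).

Definition convex_set (A : set B) : Prop :=
  forall a b (t : R), A a -> A b -> 0 <= t <= 1 -> A (t *: a + (1 - t) *: b).

Definition w_closed (A : set B) : Prop := w_closure A `<=` A.

End SSD.

(* Main.v *)
From HB Require Import structures.
From mathcomp Require Import all_boot all_order all_algebra.
From mathcomp Require Import boolp classical_sets reals constructive_ereal ereal.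
From mathcomp Require Import ring lra.
Require Import Defs.
Set Implicit Arguments. Unset Strict Implicit. Unset Printing Implicit Defensive.
Import Order.TTheory GRing.Theory Num.Theory.
Local Open Scope classical_set_scope.
Local Open Scope ring_scope.

Section SepS.
Variables (R : realType) (n : nat).
Definition dot (u v : 'I_n -> R) : R := \sum_(i < n) u i * v i.

Lemma dot_ge0 u : 0 <= dot u u.
Proof. by apply: sumr_ge0 => i _; rewrite -expr2 sqr_ge0. Qed.

Lemma dot_coord u i : u i ^+ 2 <= dot u u.
Proof.
rewrite /dot (bigD1 i) //= expr2 lerDl.
by apply: sumr_ge0 => j _; rewrite -expr2 sqr_ge0.
Qed.

Lemma small_lim (a m C : R) : 0 <= C ->
  (forall r, 0 < r -> r <= 1 -> m - r * C <= a) -> m <= a.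
Proof.
move=> C0 H; rewrite leNgt; apply/negP => am.
set D := m - a.
have D0 : 0 < D by rewrite subr_gt0.
have E0 : 0 < C + 1 + D by lra.
set r := D / (C + 1 + D).
have r0 : 0 < r by rewrite divr_gt0.
have rE : r * (C + 1 + D) = D by rewrite /r mulrVK // unitfE gt_eqF.
have r1 : r <= 1 by rewrite ler_pdivrMr // mul1r; lra.
have := H r r0 r1.
have : 0 < r * (1 + D) by rewrite mulr_gt0 //; lra.
rewrite /D in rE *. nra.
Qed.

Lemma separation (K : set ('I_n -> R)) (d : R) :
  (forall u v t, K u -> K v -> 0 <= t <= 1 -> K (fun i => t * u i + (1 - t) * v i)) ->
  K !=set0 -> 0 < d -> (forall z, K z -> d <= dot z z) ->
  exists l, forall z, K z -> d <= dot l z.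
Proof.
move=> Kconv [z0 Kz0] d0 Kd.
pose N := [set dot z z | z in K].
have hinf : has_inf N.
  split; first by exists (dot z0 z0), z0.
  by exists 0 => _ [z _ <-]; exact: dot_ge0.
pose m := inf N.
have hm z : K z -> m <= dot z z.
  by move=> Kz; apply: (ge_inf hinf.2); exists z.
have hd : d <= m.
  by apply: lb_le_inf; [exact: hinf.1| move=> _ [z Kz <-]; exact: Kd].
have hadh eps : 0 < eps -> exists z, K z /\ dot z z < m + eps.
  move=> e0; have [_ [z Kz <-] lt] := inf_adherent e0 hinf; by exists z.
pose lev r y := K y /\ dot y y <= m + r ^+ 2.
have key1 r y y' : 0 <= r -> lev r y -> lev r y' -> forall i, `|y i - y' i| <= 2 * r.
  move=> r0 [Ky ly] [Ky' ly'] i.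
  pose mid := fun i => 2^-1 * y i + (1 - 2^-1) * y' i.
  pose D := fun i => y i - y' i.
  have Kmid : K mid by apply: Kconv => //; apply/andP; split; lra.
  have idt : dot D D + 4 * dot mid mid = 2 * dot y y + 2 * dot y' y'.
    rewrite /dot !mulr_sumr -!big_split /=.
    by apply: eq_bigr => j _; rewrite /mid /D; by field.
  have := hm _ Kmid; have := dot_coord D i; rewrite /D => Di hmid.
  have : (y i - y' i) ^+ 2 <= (2 * r) ^+ 2 by lra.
  rewrite ler_norml => h; apply/andP; split; nra.
pose ys i := sup [set x | exists r y, 0 < r /\ lev r y /\ x = y i - 2 * r].
have levW r r' y : 0 <= r -> r <= r' -> lev r y -> lev r' y.
  move=> r0 rr' [Ky ly]; split => //.
  have : r ^+ 2 <= r' ^+ 2 by rewrite !expr2; nra.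
  lra.
have key2 r y : 0 < r -> lev r y -> forall i, `|ys i - y i| <= 2 * r.
  move=> r0 ly i.
  have ub : ubound [set x | exists r y, 0 < r /\ lev r y /\ x = y i - 2 * r] (y i + 2 * r).
    move=> x [r' [y' [r'0 [ly' ->]]]].
    case: (leP r r') => rr'.
      have := key1 r' y y' (ltW r'0) (levW _ _ _ (ltW r0) rr' ly) ly' i.
      rewrite ler_norml => /andP[h1 h2]; lra.
    have := key1 r y y' (ltW r0) ly (levW _ _ _ (ltW r'0) (ltW rr') ly') i.
    rewrite ler_norml => /andP[h1 h2]; lra.
  have h1 : ys i <= y i + 2 * r.
    by apply: ge_sup ub; exists (y i - 2 * r), r, y.
  have h2 : y i - 2 * r <= ys i.
    by apply: ub_le_sup; [exists (y i + 2 * r)| exists r, y].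
  rewrite ler_norml; apply/andP; split; lra.
exists ys => z Kz; apply: (le_trans hd).
pose Sz := \sum_(i < n) `|z i|.
pose Mz := 2 * dot z z + 2 * (m + 1).
have Sz0 : 0 <= Sz by apply: sumr_ge0 => i _.
have Mz0 : 0 <= Mz.
  have := dot_ge0 z; have := hm _ Kz; have := dot_ge0 z0; have := hm _ Kz0.
  rewrite /Mz; lra.
apply: (small_lim (C := 2^-1 + Mz / 2 + 2 * Sz)); first lra.
move=> r r0 r1.
have r20 : 0 < r ^+ 2 by rewrite exprn_gt0.
have [y [Ky ly]] := hadh _ r20.
have lyr : lev r y by split => //; exact: ltW.
pose w := fun i => r * z i + (1 - r) * y i.
have Kw : K w by apply: Kconv => //; apply/andP; split; lra.
have hw := hm _ Kw.
have idw : dot w w = dot y y + 2 * r * (dot y z - dot y y)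
   + r ^+ 2 * (dot z z - 2 * dot y z + dot y y).
  rewrite /dot !mulr_sumr -!sumrB !mulr_sumr -!big_split /= !mulr_sumr -!big_split /=.
  by apply: eq_bigr => j _; rewrite /w; ring.
have idp : dot (fun i => z i + y i) (fun i => z i + y i) = dot z z + 2 * dot y z + dot y y.
  rewrite /dot !mulr_sumr -!big_split /=.
  by apply: eq_bigr => j _; ring.
have hp := dot_ge0 (fun i => z i + y i); rewrite idp in hp.
have hzy : dot z z - 2 * dot y z + dot y y <= Mz.
  have : r ^+ 2 <= 1 by rewrite expr2; nra.
  rewrite /Mz; lra.
have hyz : m - r / 2 - r * Mz / 2 <= dot y z.
  have h3 : r ^+ 2 * (dot z z - 2 * dot y z + dot y y) <= r ^+ 2 * Mz.
    by rewrite ler_wpM2l // ltW.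
  have hmy := hm _ Ky.
  have h4 : - r ^+ 2 - r ^+ 2 * Mz <= 2 * r * (dot y z - dot y y) by lra.
  have h6 : 2 * r * m <= 2 * r * dot y y by rewrite ler_pM2l // mulr_gt0.
  have h5 : r * (m - r / 2 - r * Mz / 2) <= r * dot y z.
    have e1 : r * (m - r / 2 - r * Mz / 2) = (2 * r * m - r ^+ 2 - r ^+ 2 * Mz) / 2.
      by rewrite expr2; by field.
    have e2 : 2 * r * (dot y z - dot y y) = 2 * r * dot y z - 2 * r * dot y y by ring.
    rewrite e1 ler_pdivrMr //; lra.
  by rewrite ler_pM2l in h5.
have hys : - (2 * r * Sz) <= dot ys z - dot y z.
  rewrite /dot -sumrB /Sz mulr_sumr -sumrN; apply: ler_sum => i _.
  rewrite -mulrBl; apply: lerNnormlW; rewrite normrM.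
  by apply: ler_wpM2r => //; exact: key2.
have : r * (2^-1 + Mz / 2 + 2 * Sz) = r / 2 + r * Mz / 2 + 2 * r * Sz by field.
lra.
Qed.
End SepS.

Section Main.
Variables (R : realType) (B : lmodType R) (bf : B -> B -> R).
Hypothesis hsym : forall x y, bf x y = bf y x.
Hypothesis hlin : forall (a : R) x y z, bf (a *: x + y) z = a * bf x z + bf y z.

Lemma bf0l z : bf 0 z = 0.
Proof.
have := hlin 1 0 0 z; rewrite scaler0 addr0 mul1r => h; lra.
Qed.

Lemma bfDl x y z : bf (x + y) z = bf x z + bf y z.
Proof. by have := hlin 1 x y z; rewrite scale1r mul1r. Qed.
Lemma bfZl a x z : bf (a *: x) z = a * bf x z.
Proof. by have := hlin a x 0 z; rewrite addr0 bf0l addr0. Qed.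
Lemma bfNl x z : bf (- x) z = - bf x z.
Proof. by rewrite -scaleN1r bfZl mulN1r. Qed.
Lemma bfBl x y z : bf (x - y) z = bf x z - bf y z.
Proof. by rewrite bfDl bfNl. Qed.
Lemma bfZr a x z : bf z (a *: x) = a * bf z x.
Proof. by rewrite hsym bfZl hsym. Qed.
Lemma bfBr x y z : bf z (x - y) = bf z x - bf z y.
Proof. by rewrite hsym bfBl !(hsym z). Qed.
Lemma bf_sumr k x (F : 'I_k -> B) : bf x (\sum_(i < k) F i) = \sum_(i < k) bf x (F i).
Proof.
elim/big_rec2: _ => [|i y1 y2 _ <-]; first by rewrite hsym bf0l.
by rewrite hsym bfDl !(hsym _ x).
Qed.
Lemma qB x y : q bf (x - y) = q bf x - bf x y + q bf y.
Proof.
rewrite /q !bfBl !bfBr (hsym y x); by field.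
Qed.
Lemma qN x : q bf (- x) = q bf x.
Proof. by rewrite /q bfNl hsym bfNl opprK. Qed.

Lemma Phi_ge A x a : A a -> ((bf x a - q bf a)%:E <= Phi bf A x)%E.
Proof. by move=> Aa; apply: ereal_sup_ubound; exists a. Qed.

Lemma conj_ge f b c : ((bf c b)%:E - f c <= conj_at bf f b)%E.
Proof. by apply: ereal_sup_ubound; exists c. Qed.

Lemma Phi_A A : q_positive bf A -> forall a, A a -> Phi bf A a = (q bf a)%:E.
Proof.
move=> [_ hA] a Aa; apply/eqP; rewrite eq_le; apply/andP; split.
  apply: ge_ereal_sup => _ [a' Aa' <-]; rewrite lee_fin.
  have := hA _ _ Aa Aa'; rewrite qB; lra.
by have := Phi_ge a Aa; rewrite /q; congr (_ <= _)%E; congr (_%:E); by field.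
Qed.

Lemma conj_A A : q_positive bf A -> forall a, A a -> conj_at bf (Phi bf A) a = (q bf a)%:E.
Proof.
move=> hA a Aa; apply/eqP; rewrite eq_le; apply/andP; split.
  apply: ge_ereal_sup => _ [c _ <-].
  have := Phi_ge c Aa; case: (Phi bf A c) => [r| |] //=; rewrite ?lee_fin.
    move=> h; lra.
  by rewrite leNye.
have := conj_ge (Phi bf A) a a; rewrite (Phi_A hA Aa) -EFinB.
by congr (_ <= _)%E; congr (_%:E); rewrite /q; by field.
Qed.

Lemma conv_hull_sub (A : set B) : A `<=` conv_hull A.
Proof.
move=> a Aa; exists 1%N, (fun _ => 1), (fun _ => a).
by rewrite !big_ord1 scale1r; split => //; split.
Qed.

Lemma conv_hull_convex (A : set B) : convex_set (conv_hull A).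
Proof.
move=> x y t [n1 [l1 [a1 [h1 [s1 [A1 ->]]]]]] [n2 [l2 [a2 [h2 [s2 [A2 ->]]]]]] /andP[t0 t1].
have sl (i : 'I_n1) : @split n1 n2 (lshift n2 i) = inl i := unsplitK (inl i).
have sr (j : 'I_n2) : @split n1 n2 (rshift n1 j) = inr j := unsplitK (inr j).
exists (n1 + n2)%N,
  (fun k => match split k with inl i => t * l1 i | inr j => (1 - t) * l2 j end),
  (fun k => match split k with inl i => a1 i | inr j => a2 j end).
split; first by move=> k; case: (split k) => i; apply: mulr_ge0 => //; rewrite subr_ge0.
split.
  rewrite big_split_ord /=.
  under eq_bigr do rewrite sl.
  under [X in _ + X]eq_bigr do rewrite sr.
  by rewrite -!mulr_sumr s1 s2; ring.
split; first by move=> k; case: (split k).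
rewrite big_split_ord /= !scaler_sumr; congr (_ + _); apply: eq_bigr => i _.
  by rewrite sl scalerA.
by rewrite sr scalerA.
Qed.

Lemma conv_sub_convex (A : set B) : convex_set A -> conv_hull A `<=` A.
Proof.
move=> cA x [n [l [a [l0 [s1 [Aa ->]]]]]].
elim: n l a l0 s1 Aa => [|n IH] l a l0 s1 Aa.
  by move: s1; rewrite big_ord0 => /eqP; rewrite eq_sym oner_eq0.
rewrite big_ord_recr /=; rewrite big_ord_recr /= in s1.
set lw := fun i : 'I_n => l (widen_ord (leqnSn n) i).
set aw := fun i : 'I_n => a (widen_ord (leqnSn n) i).
have lw0 i : 0 <= lw i by exact: l0.
set s := \sum_(i < n) lw i in s1 *.
have s0 : 0 <= s by apply: sumr_ge0.
have lm0 := l0 ord_max.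
have [s0e|sn0] := eqVneq s 0.
  have z i : lw i = 0 by apply: (psumr_eq0P (P := xpredT)) => // j _.
  have -> : \sum_(i < n) l (widen_ord (leqnSn n) i) *: a (widen_ord (leqnSn n) i) = 0.
    by apply: big1 => i _; rewrite -/(lw i) z scale0r.
  have -> : l ord_max = 1 by lra.
  by rewrite add0r scale1r.
have spos : 0 < s by rewrite lt_def sn0.
pose y := \sum_(i < n) (lw i / s) *: aw i.
have Ay : A y.
  apply: (IH (fun i => lw i / s) aw) => //.
  - by move=> i; apply: divr_ge0.
  - by rewrite -mulr_suml divff.
  - by move=> i; exact: Aa.
have -> : \sum_(i < n) l (widen_ord (leqnSn n) i) *: a (widen_ord (leqnSn n) i) = s *: y.
  rewrite scaler_sumr; apply: eq_bigr => i _; rewrite scalerA.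
  by rewrite [s * _]mulrC divfK.
have -> : l ord_max = 1 - s by lra.
apply: cA => //; apply/andP; split => //; lra.
Qed.

Lemma G_fin A : q_positive bf A -> forall b, Gset bf (Phi bf A) b ->
  exists pr pc, Phi bf A b = pr%:E /\ conj_at bf (Phi bf A) b = pc%:E /\ pr + pc = bf b b.
Proof.
move=> hA b; rewrite /Gset /=.
have [a0 Aa0] := hA.1.
have h1 := Phi_ge b Aa0.
have h2 := conj_ge (Phi bf A) b a0; rewrite (Phi_A hA Aa0) in h2.
case: (Phi bf A b) h1 => [r| |] h1; case: (conj_at bf (Phi bf A) b) h2 => [s| |] h2 //=.
by move=> [] <-; exists r, s.
Qed.

Lemma part1a A : q_positive bf A -> A `<=` Pq bf (conj_at bf (Phi bf A)).
Proof. by move=> hA a Aa; rewrite /Pq /= conj_A. Qed.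

Lemma part1b A : q_positive bf A -> Pq bf (conj_at bf (Phi bf A)) `<=` Gset bf (Phi bf A).
Proof.
move=> hA b; rewrite /Pq /Gset /= => hb.
have [a0 Aa0] := hA.1.
have up : (Phi bf A b <= (q bf b)%:E)%E.
  apply: ge_ereal_sup => _ [a Aa <-]; rewrite -hb.
  have := conj_ge (Phi bf A) b a; rewrite (Phi_A hA Aa) -EFinB hsym; exact.
have lo := conj_ge (Phi bf A) b b; rewrite hb in lo.
have h1 := Phi_ge b Aa0.
rewrite hb; case: (Phi bf A b) up lo h1 => [r| |] //=; rewrite ?lee_fin => up lo h1.
have -> : r = q bf b by apply/le_anti; apply/andP; split => //; move: lo; rewrite /q; lra.
by rewrite -EFinD /q; congr (_%:E); field.
Qed.

Lemma part1pi A : q_positive bf A -> Gset bf (Phi bf A) `<=` pi_set bf A.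
Proof.
move=> hA b Gb a Aa.
have [pr [pc [e1 [e2 e3]]]] := G_fin hA Gb.
have h1 := Phi_ge b Aa; rewrite e1 lee_fin in h1.
have h2 := conj_ge (Phi bf A) b a; rewrite e2 (Phi_A hA Aa) -EFinB lee_fin in h2.
rewrite qB; rewrite (hsym a b) in h2; have qb : q bf b * 2 = bf b b by rewrite /q; field.
lra.
Qed.

Lemma part1conv A : q_positive bf A -> Gset bf (Phi bf A) `<=` convw bf A.
Proof.
move=> hA b Gb cs e e0.
apply: contrapT => hno.
have [a0 Aa0] := hA.1.
have [pr [pc [e1 [e2 e3]]]] := G_fin hA Gb.
pose n := size cs.
pose cv (i : 'I_n) := nth 0 cs i.
pose T s := fun i : 'I_n => bf s (cv i) - bf b (cv i).
pose K := [set z | exists2 s, conv_hull A s & z = T s].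
have [l hl] : exists l, forall z, K z -> e ^+ 2 <= dot l z.
  apply: separation.
  - move=> u v t [s1 c1 ->] [s2 c2 ->] t01.
    exists (t *: s1 + (1 - t) *: s2); first exact: conv_hull_convex.
    by apply/funext => i; rewrite /T hlin bfZl; ring.
  - by exists (T a0), a0 => //; exact: conv_hull_sub.
  - by rewrite exprn_gt0.
  - move=> _ [s cs_ ->].
    have [c cin hc] : exists2 c, c \in cs & e <= `|bf s c - bf b c|.
      case: (boolP (all (fun c => `|bf s c - bf b c| < e) cs)) => hal.
        by exfalso; apply: hno; exists s.
      move: hal; rewrite -has_predC => /hasP[c cin /=]; rewrite -leNgt => ?.
      by exists c.
    have ilt : (index c cs < n)%N by rewrite index_mem.
    have := dot_coord (T s) (Ordinal ilt).
    rewrite /T /cv /= nth_index // => h.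
    apply: le_trans h.
    rewrite -(real_normK (num_real (bf s c - bf b c))).
    by rewrite ler_pXn2r // ?nnegrE ?(ltW e0) //; exact: (le_trans (ltW e0)).
pose dv := \sum_(i < n) l i *: cv i.
have hd s : conv_hull A s -> bf b dv + e ^+ 2 <= bf s dv.
  move=> cs_.
  have := hl (T s) (ex_intro2 _ _ s cs_ erefl).
  have -> : dot l (T s) = bf s dv - bf b dv.
    rewrite /dv !bf_sumr -sumrB /dot; apply: eq_bigr => i _.
    by rewrite !bfZr /T; ring.
  lra.
pose x := b - dv.
have up : (Phi bf A x <= (pr - bf b dv - e ^+ 2)%:E)%E.
  apply: ge_ereal_sup => _ [a Aa <-]; rewrite lee_fin.
  have h1 := Phi_ge b Aa; rewrite e1 lee_fin in h1.
  have h2 := hd a (conv_hull_sub Aa).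
  rewrite /x bfBl (hsym dv a); lra.
have lo := conj_ge (Phi bf A) b x; rewrite e2 in lo.
have h0 := Phi_ge x Aa0.
case: (Phi bf A x) up lo h0 => [r| |] //=; rewrite ?lee_fin => up lo h0.
move: lo; rewrite /x bfBl (hsym dv b).
have : 0 < e ^+ 2 by rewrite exprn_gt0.
lra.
Qed.
End Main.

Theorem mainTheorem7 (R : realType) (B : lmodType R) (bf : B -> B -> R)
  (hB : SSD_space bf) (A : set B) (hA : q_positive bf A) :
  (A `<=` Pq bf (conj_at bf (Phi bf A)) /\
   Pq bf (conj_at bf (Phi bf A)) `<=` Gset bf (Phi bf A) /\
   Gset bf (Phi bf A) `<=` pi_set bf A `&` convw bf A) /\
  (convex_set A -> w_closed bf A -> A = Gset bf (Phi bf A)) /\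
  (max_q_positive bf A -> A = Gset bf (Phi bf A)).
Proof.
have [_ [hsym hlin]] := hB.
have p1a := part1a hsym hlin hA.
have p1b := part1b hsym hlin hA.
have p1pi := part1pi hsym hlin hA.
have p1c := part1conv hsym hlin hA.
have AG : A `<=` Gset bf (Phi bf A) by move=> a /p1a /p1b.
split; first by split => //; split => // b Gb; split; [exact: p1pi|exact: p1c].
split.
  move=> cA wA; apply/seteqP; split => // b /p1c hb.
  apply: wA => cs e e0; have [s [cs_ hs]] := hb cs e e0.
  by exists s; split => //; exact: (conv_sub_convex cA).
move=> [_ hmax]; apply/seteqP; split => // b Gb.
have pib := p1pi _ Gb.
have hA' : q_positive bf (A `|` [set b]).
  split; first by exists b; right.
  have [_ hA2] := hA.
  move=> x y [Ax|->] [Ay|->].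
  - exact: hA2.
  - by rewrite -opprB qN; [exact: pib|exact: hsym|exact: hlin].
  - exact: pib.
  - by rewrite subrr /q (bf0l hlin) mul0r.
have := hmax _ hA' (@subsetUl _ A [set b]).
by move=> <-; right.
Qed.
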